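(* Let $V$ be one of the following algebraic tensor products of $\mathfrak{sl}(2,\mathbb{C})$-modules: (i) $N(0,b)\otimes N(a,0)$ with $a,b\in\mathbb{R}_{<0}$; (ii) $N(-1-x+iy,x+iy)\otimes N(a,0)$ with $-1\le x<0$, $y\in\mathbb{R}_{>0}$, $a\in\mathbb{R}_{<0}$; (iii) $N(a_1,a_2)\otimes N(a,0)$ with $-1<a_1,a_2<0$, $a\in\mathbb{R}_{<0}$. Write the first factor as $N(b_1,b_2)$ (so $(b_1,b_2)=(0,b)$, resp. $(-1-x+iy,x+iy)$, resp. $(a_1,a_2)$), let $x(k)$ be its standard basis, let $y(l)=x(-l)$ ($l\in\mathbb{Z}_{\ge0}$) be the reindexed standard basis of $N(a,0)$, and put $z(k,l)=x(k)\otimes y(l)$. For $n_0\in\mathbb{Z}$ let $V_{n_0}$ be the weight space of $V$ of weight $b_1-b_2+a+2n_0$ (spanned by the $z(k,l)$ with $k-l=n_0$), let $l_0$ be the smallest $l\in\mathbb{Z}_{\ge0}$ for which $z(l+n_0,l)$ is defined (i.e. $l+n_0$ is an index of the basis of the first factor), and set $z_{n_0}=z(l_0+n_0,l_0)$. Let $\mathfrak{c}=\mathbb{C}\,(FE)$, so that $\mathcal{U}(\mathfrak{c})=\mathbb{C}[FE]\subset\mathcal{U}(\mathfrak{sl}(2,\mathbb{C}))$. Then: (1) as a $\mathcal{U}(\mathfrak{c})$-module, $V_{n_0}$ is cyclic, generated by $z_{n_0}$; (2) the map $\rho_{n_0}:\mathcal{U}(\mathfrak{c})\to V_{n_0}$,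 $\rho_{n_0}(u)=u\cdot z_{n_0}$, is a bijection.
   Context: $\mathfrak{sl}(2,\mathbb{C})$ has basis $H,E,F$ with $[H,E]=2E$, $[H,F]=-2F$, $[E,F]=H$; it acts on tensor products by $X(v\otimes w)=Xv\otimes w+v\otimes Xw$. For $(c_1,c_2)\in\mathbb{C}^2$ let $\mathcal{K}(c_1,c_2)$ be the set of $k\in\mathbb{Z}$ such that for each $i\in\{1,2\}$ with $c_i\in\mathbb{Z}$ one has ($c_i+(-1)^{i-1}k<0$ iff $c_i<0$). The module $N(c_1,c_2)$ has basis $\{x(k):k\in\mathcal{K}(c_1,c_2)\}$ (the ''standard basis''; $x(k):=0$ for $k\notin\mathcal{K}$), with $H\cdot x(k)=(c_1-c_2+2k)x(k)$ and: (I) if neither $c_1$ nor $c_2$ is a negative integer: $E x(k)=(c_2-k)x(k+1)$, $F x(k)=(c_1+k)x(k-1)$; (II) if $c_1$ is not a negative integer and $c_2$ is: $E x(k)=x(k+1)$, $F x(k)=(c_1+k)(c_2-k+1)x(k-1)$; (III) if $c_1$ is a negative integer and $c_2$ is not: $E x(k)=(c_1+k+1)(c_2-k)x(k+1)$, $F x(k)=x(k-1)$; (IV) if both are negative integers: $E x(k)=(c_1+k+1)x(k+1)$, $F x(k)=(c_2-k+1)x(k-1)$. For $a<0$ the index set of $N(a,0)$ is contained in $\mathbb{Z}_{\le 0}$, whence the reindexing $y(l)=x(-l)$. *)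

(* Defs.v *)
From mathcomp Require Import all_boot all_order all_algebra.
From mathcomp Require Import boolp reals.
From mathcomp.real_closed Require Export complex.
Set Implicit Arguments. Unset Strict Implicit. Unset Printing Implicit Defensive.
Import Order.TTheory GRing.Theory Num.Theory.
Local Open Scope ring_scope.

Section SL2.
Variable R : realType.
Local Notation C := R[i].

Definition isNegInt (c : C) : Prop := exists z : int, z < 0 /\ c = z%:~R.

Definition inK (c1 c2 : C) (k : int) : Prop :=
  (forall z : int, c1 = z%:~R -> ((z + k < 0) <-> (z < 0))) /\
  (forall z : int, c2 = z%:~R -> ((z - k < 0) <-> (z < 0))).

(* E x(k) = ecoef c1 c2 k * x(k+1) *)
Definition ecoef (c1 c2 : C) (k : int) : C :=
  let K := (k%:~R : C) in
  if asbool (isNegInt c1) then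
    (if asbool (isNegInt c2) then c1 + K + 1
     else (c1 + K + 1) * (c2 - K))
  else
    (if asbool (isNegInt c2) then 1
     else c2 - K).

(* F x(k) = fcoef c1 c2 k * x(k-1) *)
Definition fcoef (c1 c2 : C) (k : int) : C :=
  let K := (k%:~R : C) in
  if asbool (isNegInt c1) then
    (if asbool (isNegInt c2) then c2 - K + 1
     else 1)
  else
    (if asbool (isNegInt c2) then (c1 + K) * (c2 - K + 1)
     else c1 + K).

(* Action on coefficient vectors v : int -> C of N(c1,c2);
   v j is the coefficient of x(j).  (x(k) := 0 for k outside K.) *)
Definition Eact (c1 c2 : C) (v : int -> C) (j : int) : C :=
  if asbool (inK c1 c2 j) then ecoef c1 c2 (j - 1) * v (j - 1) else 0.
Definition Fact (c1 c2 : C) (v : int -> C) (j : int) : C :=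
  if asbool (inK c1 c2 j) then fcoef c1 c2 (j + 1) * v (j + 1) else 0.
Definition Hact (c1 c2 : C) (v : int -> C) (j : int) : C :=
  (c1 - c2 + 2 * j%:~R) * v j.

(* Tensor product N(b1,b2) (x) N(a1,a2): an element is given by its
   coefficient function f, f k m = coefficient of x(k) (x) x(m). *)
Definition tens := int -> int -> C.

Definition inV (b1 b2 a1 a2 : C) (f : tens) : Prop :=
  (forall k m, f k m <> 0 -> inK b1 b2 k /\ inK a1 a2 m) /\
  exists N : nat, forall k m, (N < `|k|)%N \/ (N < `|m|)%N -> f k m = 0.

Definition Etens (b1 b2 a1 a2 : C) (f : tens) : tens :=
  fun k m => Eact b1 b2 (fun k' => f k' m) k + Eact a1 a2 (f k) m.
Definition Ftens (b1 b2 a1 a2 : C) (f : tens) : tens :=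
  fun k m => Fact b1 b2 (fun k' => f k' m) k + Fact a1 a2 (f k) m.
Definition Htens (b1 b2 a1 a2 : C) (f : tens) : tens :=
  fun k m => Hact b1 b2 (fun k' => f k' m) k + Hact a1 a2 (f k) m.

Definition FEtens (b1 b2 a1 a2 : C) (f : tens) : tens :=
  Ftens b1 b2 a1 a2 (Etens b1 b2 a1 a2 f).

Definition weight_space (b1 b2 a1 a2 : C) (w : C) (f : tens) : Prop :=
  inV b1 b2 a1 a2 f /\ Htens b1 b2 a1 a2 f = (fun k m => w * f k m).

Definition basis_tens (k0 m0 : int) : tens :=
  fun k m => if (k == k0) && (m == m0) then 1 else 0.

(* U(c) = C[FE] is identified with the polynomial ring {poly C} via t |-> FE;
   rho z p = p(FE) . z *)
Definition rho (b1 b2 a1 a2 : C) (z : tens) (p : {poly C}) : tens :=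
  fun k m => \sum_(i < size p) p`_i * (iter i (FEtens b1 b2 a1 a2) z) k m.

End SL2.

(* Main.v *)
Require Import Defs.
From mathcomp Require Import all_boot all_order all_algebra.
From mathcomp Require Import boolp reals.
From mathcomp.real_closed Require Import complex.
From mathcomp Require Import zify ring lra.
Import Order.TTheory GRing.Theory Num.Theory.
Local Open Scope ring_scope.

Lemma intrC (R : realType) (z : int) : (z%:~R : R[i]) = Complex (z%:~R) 0.
Proof. by rewrite complexr0 rmorph_int. Qed.

Lemma Complex_eqE (R : realType) (x y u v : R) : (Complex x y = Complex u v) <-> (x = u /\ y = v).
Proof. by split=> [[-> ->]|[-> ->]]. Qed.

Lemma intr_eqR (R : realType) (z w : int) : (z%:~R : R) = w%:~R -> z = w.
Proof. by move/eqP; rewrite eqr_int => /eqP. Qed.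

Lemma intr_ltR (R : realType) (z : int) : ((z%:~R : R) < 0) = (z < 0).
Proof. by rewrite ltrz0. Qed.

Section Basic.
Variable R : realType.
Local Notation C := R[i].

Lemma C0E : (0 : C) = Complex 0 0. Proof. by []. Qed.

Lemma intrC_eq (z : int) (u v : R) : (z%:~R : C) = Complex u v -> u = z%:~R /\ v = 0.
Proof. by rewrite intrC => -[<- <-]. Qed.

Lemma not_negint0 : ~ isNegInt (0 : C).
Proof. move=> [z [Hz /esym /intrC_eq [H _]]]. move/esym: H => /eqP; rewrite intr_eq0 => /eqP Hz0. by rewrite Hz0 in Hz. Qed.

Lemma notint (u : R) : -1 < u -> u < 0 -> forall z : int, u <> z%:~R.
Proof.
move=> H1 H2 z Hz; rewrite Hz in H1 H2.
rewrite ltrz0 in H2. have : (-1 : int) < z by rewrite -(ltr_int R) mulrNz.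
lia.
Qed.

Lemma Im_intr (z : int) : complex.Im (z%:~R : C) = 0. Proof. by rewrite (intrC R z). Qed.
Lemma Re_intr (z : int) : complex.Re (z%:~R : C) = z%:~R. Proof. by rewrite (intrC R z). Qed.

Lemma ImB (x y : C) : complex.Im (x - y) = complex.Im x - complex.Im y. Proof. by case: x => ? ?; case: y => ? ?. Qed.
Lemma ReB (x y : C) : complex.Re (x - y) = complex.Re x - complex.Re y. Proof. by case: x => ? ?; case: y => ? ?. Qed.
End Basic.

Section Cases.
Variable R : realType.
Local Notation C := R[i].

Lemma inK_step (c1 c2 : C) k : inK c1 c2 k ->
  (forall z : int, c1 = z%:~R -> 0 <= z) -> (forall z : int, c2 = z%:~R -> z < 0) ->
  inK c1 c2 (k + 1).
Proof.
move=> [H1 H2] P1 P2; split=> z Hz.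
- have := H1 z Hz; have := P1 z Hz; move=> h [h1 h2]; split=> h3; lia.
- have := H2 z Hz; have := P2 z Hz; move=> h [h1 h2]; split=> h3; lia.
Qed.

Lemma Ka (a : R) m : a < 0 -> inK (Complex a 0) 0 m <-> m <= 0.
Proof.
move=> Ha; split.
- move=> [_ H2]; have := H2 0; rewrite mulr0z => /(_ erefl) [h1 h2].
  rewrite leNgt; apply/negP => hm; have : 0 - m < 0 by lia. by move/h1.
- move=> hm; split=> z Hz.
  + move/esym: Hz => /intrC_eq [Haz _]. have : z < 0 by rewrite -(ltrz0 R) -Haz.
    move=> hz; split=> h; lia.
  + move/esym: Hz; rewrite C0E => /intrC_eq [Hz _]. move/esym/eqP: Hz; rewrite intr_eq0 => /eqP ->.
    split=> h; lia.
Qed.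

Lemma Hfa (a : R) (j : int) : a < 0 -> j <= 0 -> fcoef (Complex a 0) 0 j != 0.
Proof.
move=> Ha Hj; rewrite /fcoef (asboolF (@not_negint0 R)).
case: asboolP => _; first by rewrite oner_eq0.
apply/eqP => /(congr1 (@complex.Re R)). rewrite (intrC R j) /= => h.
have : (j%:~R : R) <= 0 by rewrite lerz0.
lra.
Qed.

Lemma notintC (u v : R) : (v != 0 \/ (-1 < u /\ u < 0)) -> forall z : int, Complex u v <> z%:~R.
Proof.
move=> H z /esym /intrC_eq [hu hv]; case: H => [/eqP|[h1 h2]]; first by [].
move: hu; exact: notint h1 h2 z.
Qed.

Lemma ecoef_ni (b1 b2 : C) k : ~ isNegInt b1 -> ~ isNegInt b2 -> (forall z : int, b2 <> z%:~R) ->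
  ecoef b1 b2 k != 0.
Proof.
move=> h1 h2 h3; rewrite /ecoef (asboolF h1) (asboolF h2) subr_eq0; apply/eqP; exact: h3.
Qed.

Lemma cases_props (b1 b2 : C) :
  ((exists b : R, b < 0 /\ b1 = 0 /\ b2 = Complex b 0) \/
   (exists x y : R, -1 <= x /\ x < 0 /\ 0 < y /\
                    b1 = Complex (-1 - x) y /\ b2 = Complex x y) \/
   (exists a1 a2 : R, -1 < a1 /\ a1 < 0 /\ -1 < a2 /\ a2 < 0 /\
                      b1 = Complex a1 0 /\ b2 = Complex a2 0)) ->
  (forall z : int, b1 = z%:~R -> 0 <= z) /\ (forall z : int, b2 = z%:~R -> z < 0) /\
  (forall k, ecoef b1 b2 k != 0).
Proof.
case=> [[b [hb [-> ->]]]|[[x [y [hx1 [hx2 [hy [-> ->]]]]]]|[a1 [a2 [h1 [h2 [h3 [h4 [-> ->]]]]]]]]].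
- split; [|split].
  + move=> z; rewrite C0E => /esym /intrC_eq [hz _]; move/esym/eqP: hz; rewrite intr_eq0 => /eqP ->; done.
  + move=> z /esym /intrC_eq [hz _]; by rewrite -(ltrz0 R) -hz.
  + move=> k; rewrite /ecoef (asboolF (@not_negint0 R)); case: asboolP => hn; first by rewrite oner_eq0.
    rewrite subr_eq0; apply/eqP => hk; apply: hn; exists k; split=> //.
    by move/esym: hk => /intrC_eq [hz _]; rewrite -(ltrz0 R) -hz.
- have ny : y != 0 by rewrite gt_eqF.
  have n1 := notintC (-1 - x) y (or_introl ny).
  have n2 := notintC x y (or_introl ny).
  split; [|split].
  + by move=> z /n1.
  + by move=> z /n2.
  + move=> k; apply: ecoef_ni => //.
    * by move=> [z [_ /n1]].
    * by move=> [z [_ /n2]].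
- have n1 := notintC a1 0 (or_intror (conj h1 h2)).
  have n2 := notintC a2 0 (or_intror (conj h3 h4)).
  split; [|split].
  + by move=> z /n1.
  + by move=> z /n2.
  + move=> k; apply: ecoef_ni => //.
    * by move=> [z [_ /n1]].
    * by move=> [z [_ /n2]].
Qed.
End Cases.

Section Main.
Variable R : realType.
Local Notation C := R[i].
Variables (a : R) (b1 b2 : C) (n0 : int) (l0 : nat).
Hypothesis Ha : a < 0.
Hypothesis Heb : forall k, ecoef b1 b2 k != 0.
Hypothesis HKb : forall k, inK b1 b2 k -> inK b1 b2 (k + 1).
Hypothesis Hl0 : inK b1 b2 (l0%:Z + n0).
Hypothesis Hmin : forall l : nat, (l < l0)%N -> ~ inK b1 b2 (l%:Z + n0).

Local Notation a1 := (Complex a 0).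
Local Notation T := (FEtens b1 b2 a1 0).
Local Notation KB k := (asbool (inK b1 b2 k)).
Local Notation KA m := (asbool (inK a1 0 m)).
Local Notation eb := (ecoef b1 b2).
Local Notation fb := (fcoef b1 b2).
Local Notation ea := (ecoef a1 0).
Local Notation fa := (fcoef a1 0).

Lemma T_expand (f : tens R) k m : T f k m =
  (if KB k then fb (k + 1) * ((if KB (k + 1) then eb k * f k m else 0) +
      (if KA m then ea (m - 1) * f (k + 1) (m - 1) else 0)) else 0) +
  (if KA m then fa (m + 1) * ((if KB k then eb (k - 1) * f (k - 1) (m + 1) else 0) +
      (if KA (m + 1) then ea m * f k m else 0)) else 0).
Proof. by rewrite /FEtens /Ftens /Etens /Fact /Eact !addrK. Qed.

Lemma T_zero (f : tens R) k m : f k m = 0 -> f (k + 1) (m - 1) = 0 -> f (k - 1) (m + 1) = 0 ->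
  T f k m = 0.
Proof. by move=> h1 h2 h3; rewrite T_expand h1 h2 h3 !(mulr0, if_same, addr0). Qed.

Definition Supp (f : tens R) := forall k m, f k m != 0 -> (k + m = n0) /\ inK b1 b2 k /\ m <= 0.
Definition Bnd (B : int) (f : tens R) := forall k m, f k m != 0 -> - m <= B.

Lemma nz3 (f : tens R) k m : T f k m != 0 ->
  f k m != 0 \/ f (k + 1) (m - 1) != 0 \/ f (k - 1) (m + 1) != 0.
Proof.
move=> H; case: (eqVneq (f k m) 0) => [h1|]; last by left.
case: (eqVneq (f (k + 1) (m - 1)) 0) => [h2|]; last by right; left.
case: (eqVneq (f (k - 1) (m + 1)) 0) => [h3|]; last by right; right.
by rewrite T_zero ?eqxx in H.
Qed.

Lemma T_Bnd B f : Bnd B f -> Bnd (B + 1) (T f).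
Proof.
move=> hB k m /nz3 [/hB|[/hB|/hB]] h; lia.
Qed.

Lemma T_Supp f : Supp f -> Supp (T f).
Proof.
move=> hS k m H.
case: (eqVneq (f k m) 0) => [h1|]; last by move/hS.
have [hk hm] : inK b1 b2 k /\ inK a1 0 m.
{ move: H; rewrite T_expand h1.
  case: (asboolP (inK b1 b2 k)) => hk; case: (asboolP (inK a1 0 m)) => hm; try by split.
  all: by rewrite ?(mulr0, if_same, addr0, add0r, mul0r) ?eqxx. }
split; last split => //; last by move/(@Ka R a m Ha): hm.
by case: (nz3 _ _ _ H) => [|[/hS|/hS]]; [rewrite h1 eqxx | |]; lia.
Qed.

Lemma Bnd0 B f k m : Bnd B f -> B < - m -> f k m = 0.
Proof. move=> hB h; case: (eqVneq (f k m) 0) => // /hB; lia. Qed.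

Lemma T_top f L k m : Supp f -> Bnd L f -> 0 <= L -> k = L + 1 + n0 -> m = - (L + 1) ->
  T f k m = fa (- L) * eb (L + n0) * f (L + n0) (- L).
Proof.
move=> hS hB hL hk hm.
rewrite T_expand (Bnd0 _ _ k m hB) ?(Bnd0 _ _ (k + 1) (m - 1) hB); try lia.
have -> : k - 1 = L + n0 by lia.
have -> : m + 1 = - L by lia.
rewrite (asboolT (_ : inK a1 0 m)); last by apply/(@Ka R a m Ha); lia.
rewrite !(mulr0, if_same, addr0, add0r).
case: (eqVneq (f (L + n0) (- L)) 0) => [->|/hS [_ [hK _]]]; first by rewrite !(mulr0, if_same).
rewrite (asboolT (_ : inK b1 b2 k)) ?mulrA //.
by rewrite hk -addrA (addrC 1) addrA; apply: HKb.
Qed.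

Definition z0 : tens R := @basis_tens R (l0%:Z + n0) (- l0%:Z).

Lemma z0_Supp : Supp z0.
Proof.
move=> k m; rewrite /z0 /basis_tens; case: andP => [[/eqP -> /eqP ->] _|]; last by rewrite eqxx.
split; [lia|split=> //; lia].
Qed.

Lemma z0_Bnd : Bnd l0%:Z z0.
Proof.
move=> k m; rewrite /z0 /basis_tens; case: andP => [[_ /eqP ->] _|]; last by rewrite eqxx.
lia.
Qed.

Lemma iter_props (i : nat) : Supp (iter i T z0) /\ Bnd (l0%:Z + i%:Z) (iter i T z0) /\
  iter i T z0 (l0%:Z + i%:Z + n0) (- (l0%:Z + i%:Z)) != 0.
Proof.
elim: i => [|i [hS [hB hT]]].
- rewrite /= addr0; split; [exact: z0_Supp|split; [exact: z0_Bnd|]].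
  by rewrite /z0 /basis_tens !eqxx oner_eq0.
- rewrite iterS; split; [exact: T_Supp|split].
  + have -> : l0%:Z + i.+1%:Z = (l0%:Z + i%:Z) + 1 by lia.
    exact: T_Bnd.
  + rewrite (T_top _ (l0%:Z + i%:Z) _ _ hS hB); try lia.
    rewrite !mulf_neq0 //; first by apply: Hfa => //; lia.
Qed.

Local Notation rh := (rho b1 b2 a1 0 z0).

Lemma rho_widen (p : {poly C}) N k m : (size p <= N)%N ->
  rh p k m = \sum_(i < N) p`_i * iter i T z0 k m.
Proof.
move=> hN; rewrite /rho (big_ord_widen N (fun i => p`_i * iter i T z0 k m) hN) big_mkcond.
apply: eq_bigr => i _; case: ltnP => // hi; by rewrite nth_default // mul0r.
Qed.

Lemma rho_lin (p q : {poly C}) c k m : rh (p + c *: q) k m = rh p k m + c * rh q k m.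
Proof.
set N := maxn (size p) (size q).
have h1 : (size p <= N)%N by rewrite leq_maxl.
have h2 : (size q <= N)%N by rewrite leq_maxr.
have h3 : (size (p + c *: q)%R <= N)%N.
  apply: (leq_trans (size_polyD _ _)); rewrite geq_max h1 /=.
  exact: (leq_trans (size_scale_leq _ _) h2).
rewrite (rho_widen _ _ k m h1) (rho_widen _ _ k m h2) (rho_widen _ _ k m h3) mulr_sumr -big_split.
apply: eq_bigr => i _; by rewrite coefD coefZ mulrDl mulrA.
Qed.

Lemma rho_Xn n k m : rh 'X^n k m = iter n T z0 k m.
Proof.
rewrite /rho size_polyXn big_ord_recr /= big1 ?add0r; first by rewrite coefXn eqxx mul1r.
move=> i _; by rewrite coefXn /= ltn_eqF ?mul0r.
Qed.

Lemma rho0 k m : rh 0 k m = 0.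
Proof. by rewrite /rho size_poly0 big_ord0. Qed.

Lemma rho_nz (p : {poly C}) k m : rh p k m != 0 -> exists i : 'I_(size p), iter i T z0 k m != 0.
Proof.
move=> H; case E: [exists i : 'I_(size p), iter i T z0 k m != 0]; first by move/existsP: E.
move/negbT: E; rewrite negb_exists => /forallP Hall.
move: H; rewrite /rho big1 ?eqxx // => i _.
by move: (Hall i); rewrite negbK => /eqP ->; rewrite mulr0.
Qed.

Lemma rho_Supp (p : {poly C}) : Supp (rh p).
Proof. move=> k m /rho_nz [i hi]; by case: (iter_props i) => hS _; apply: hS. Qed.

Lemma rho_Bnd (p : {poly C}) : Bnd (l0%:Z + (size p)%:Z) (rh p).
Proof.
move=> k m /rho_nz [i hi]; case: (iter_props i) => _ [hB _]; have := hB _ _ hi.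
have := ltn_ord i; lia.
Qed.

Local Notation w := (b1 - b2 + a1 - 0 + 2 * n0%:~R).

Lemma Supp_weight (f : tens R) B : Supp f -> Bnd B f -> weight_space b1 b2 a1 0 w f.
Proof.
move=> hS hB; split; first split.
- move=> k m /eqP /hS [_ [hk hm]]; split=> //; exact/(@Ka R a m Ha).
- exists (`|B| + `|n0|)%N => k m H; case: (eqVneq (f k m) 0) => // hf.
  have := hS _ _ hf; have := hB _ _ hf; lia.
- apply: funext => k; apply: funext => m; rewrite /Htens /Hact.
  case: (eqVneq (f k m) 0) => [->|/hS [hkm _]]; first by rewrite !mulr0 addr0.
  rewrite -hkm intrD; ring.
Qed.

Lemma weight_Supp (v : tens R) : weight_space b1 b2 a1 0 w v -> Supp v /\ exists B, Bnd B v.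
Proof.
move=> [[hK [N hN]] hH]; split.
- move=> k m hv; have [hk hm] : inK b1 b2 k /\ inK a1 0 m by apply: hK; apply/eqP.
  split; last by split=> //; exact/(@Ka R a m Ha).
  have := congr1 (fun g => g k m) hH; rewrite /Htens /Hact /= => E.
  have : (((2 * (k + m - n0)) : int)%:~R : C) * v k m = 0.
    apply: (@subr0_eq _ _ 0); rewrite subr0 -(subrr (w * v k m)) -{1}E intrM intrB intrD; ring.
  move/eqP; rewrite mulf_eq0 (negbTE hv) orbF intr_eq0 => /eqP h; lia.
- exists N%:Z => k m hv; case: (leqP `|m|%N N) => hm; first lia.
  by move/eqP: hv; rewrite (hN k m (or_intror hm)).
Qed.

Lemma cyclic_ind (n : nat) : forall v : tens R, Supp v -> Bnd (l0%:Z + n%:Z - 1) v ->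
  exists p, rh p = v.
Proof.
elim: n => [|n IH] v hS hB.
- exists 0; apply: funext => k; apply: funext => m; rewrite rho0.
  case: (eqVneq (v k m) 0) => // hv; exfalso.
  have [hkm [hk hm]] := hS _ _ hv; have := hB _ _ hv => hb.
  have Hk : k = (`|m|%N)%:Z + n0 by lia.
  apply: (Hmin `|m|%N); first lia.
  by rewrite -Hk.
- have [_ [_ ht]] := iter_props n.
  set L := l0%:Z + n%:Z.
  set t := iter n T z0 (L + n0) (- L).
  set c := v (L + n0) (- L).
  have [hSi [hBi _]] := iter_props n.
  pose v' : tens R := fun k m => v k m - c / t * iter n T z0 k m.
  have hS' : Supp v'.
    move=> k m; rewrite /v'; case: (eqVneq (v k m) 0) => [->|/hS //].
    case: (eqVneq (iter n T z0 k m) 0) => [->|/hSi //]; by rewrite mulr0 subrr eqxx.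
  have hB' : Bnd (l0%:Z + n%:Z - 1) v'.
    move=> k m hv'; have [hkm _] := hS' _ _ hv'.
    have hle : - m <= L.
      move: hv'; rewrite /v'; case: (eqVneq (v k m) 0) => [->|/hB]; last lia.
      case: (eqVneq (iter n T z0 k m) 0) => [->|/hBi //]; by rewrite mulr0 subrr eqxx.
    case: (ltrP (- m) L) => hlt; first lia.
    have Hm : m = - L by lia.
    have Hk : k = L + n0 by lia.
    move: hv'; rewrite /v' Hm Hk -/t -/c divfK ?subrr ?eqxx //.
  have [p' Hp'] := IH v' hS' hB'.
  exists (p' + (c / t) *: 'X^n); apply: funext => k; apply: funext => m.
  by rewrite rho_lin rho_Xn Hp' /v' subrK.
Qed.

Lemma rho_inj0 (r : {poly C}) : (forall k m, rh r k m = 0) -> r = 0.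
Proof.
move=> H; case: (eqVneq r 0) => // hr; exfalso.
set d := (size r).-1.
have hs : size r = d.+1 by rewrite /d prednK // size_poly_gt0.
set L := l0%:Z + d%:Z.
have := H (L + n0) (- L).
rewrite (rho_widen _ d.+1 _ _ (eq_leq hs)) big_ord_recr /= big1 ?add0r.
- apply/eqP; rewrite mulf_neq0 //; last by have [_ [_ ht]] := iter_props d.
  by rewrite -lead_coefE lead_coef_eq0.
- move=> i _; have [_ [hBi _]] := iter_props i.
  rewrite (Bnd0 _ _ _ _ hBi) ?mulr0 //; have := ltn_ord i; rewrite /L; lia.
Qed.

Lemma rho_inj (p q : {poly C}) : rh p = rh q -> p = q.
Proof.
move=> H; apply/eqP; rewrite -subr_eq0 -scaleN1r; apply/eqP; apply: rho_inj0 => k m.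
by rewrite rho_lin H mulN1r subrr.
Qed.

Lemma main_sec : (forall p, weight_space b1 b2 a1 0 w (rh p)) /\
  (forall v, weight_space b1 b2 a1 0 w v -> exists p, rh p = v) /\
  (forall p q, rh p = rh q -> p = q).
Proof.
split; [|split].
- move=> p; exact: (Supp_weight _ _ (rho_Supp p) (rho_Bnd p)).
- move=> v /weight_Supp [hS [B hB]]; apply: (cyclic_ind (`|B|%N.+1)) => // k m hv.
  have := hB _ _ hv; lia.
- exact: rho_inj.
Qed.
End Main.

Theorem mainTheorem2 (R : realType) (a : R) (b1 b2 : R[i]) (n0 : int) (l0 : nat) :
  a < 0 ->
  ((exists b : R, b < 0 /\ b1 = 0 /\ b2 = Complex b 0) \/
   (exists x y : R, -1 <= x /\ x < 0 /\ 0 < y /\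
                    b1 = Complex (-1 - x) y /\ b2 = Complex x y) \/
   (exists a1 a2 : R, -1 < a1 /\ a1 < 0 /\ -1 < a2 /\ a2 < 0 /\
                      b1 = Complex a1 0 /\ b2 = Complex a2 0)) ->
  (* l0 = least l >= 0 such that z(l+n0, l) = x(l+n0) (x) y(l) is defined,
     where y(l) = x(-l) in N(a,0) *)
  (inK b1 b2 (l0%:Z + n0) /\ inK (Complex a 0) 0 (- l0%:Z)) ->
  (forall l : nat, (l < l0)%N ->
     ~ (inK b1 b2 (l%:Z + n0) /\ inK (Complex a 0) 0 (- l%:Z))) ->
  let a1 := Complex a 0 in
  let a2 := (0 : R[i]) in
  let w := b1 - b2 + a1 - a2 + 2 * n0%:~R in
  let zn0 := @basis_tens R (l0%:Z + n0) (- l0%:Z) in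
  let rh := rho b1 b2 a1 a2 zn0 in
  (* rho maps U(c) into V_{n0} *)
  (forall p, weight_space b1 b2 a1 a2 w (rh p)) /\
  (* (1) V_{n0} is cyclic, generated by z_{n0} *)
  (forall v, weight_space b1 b2 a1 a2 w v -> exists p, rh p = v) /\
  (* (2) rho_{n0} is injective (hence, with (1), a bijection onto V_{n0}) *)
  (forall p q, rh p = rh q -> p = q).
Proof.
move=> Ha Hc [Hl0 _] Hmin0.
have [P1 [P2 Heb]] := @cases_props R b1 b2 Hc.
have HKb : forall k, inK b1 b2 k -> inK b1 b2 (k + 1) by move=> k hk; exact: (@inK_step R b1 b2 k hk P1 P2).
have Hmin : forall l : nat, (l < l0)%N -> ~ inK b1 b2 (l%:Z + n0).
  move=> l hl hK; apply: (Hmin0 l hl); split=> //; apply/(@Ka R a _ Ha); lia.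
exact: (@main_sec R a b1 b2 n0 l0 Ha Heb HKb Hl0 Hmin).
Qed.
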